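(* Let $n\ge 1$ and let $C\in\mathcal{C}_n$ be an $n$-qubit Clifford unitary. Write, for $i=1,\dots,n$, $$C Z_i C^\dagger = (-1)^{f_i} P^{\vec a_i,\vec b_i},\qquad C X_i C^\dagger = (-1)^{h_i} P^{\vec c_i,\vec d_i},$$ with $\vec a_i,\vec b_i,\vec c_i,\vec d_i\in\{0,1\}^n$ and $f_i,h_i\in\{0,1\}$, and let $$S=\begin{pmatrix} A & C'\\ B & D\end{pmatrix}\in\mathbb{F}_2^{2n\times 2n},$$ where $A,B,C',D\in\mathbb{F}_2^{n\times n}$ have $i$-th columns $\vec a_i,\vec b_i,\vec c_i,\vec d_i$ respectively ($S$ is the symplectic representation of the Pauli-sign-free part $\widetilde C$ of $C$, i.e. of the element of $\mathcal{C}_n/\mathcal{P}_n$ determined by $C$). Run the Twin-$C$ circuit on input bit strings $\vec i,\vec j\in\{0,1\}^n$, and let $\vec J=(\vec i,\vec j)\in\mathbb{F}_2^{2n}$ (column vector obtained by concatenation). Then the measurement output $\vec K=(\vec k,\vec \ell)\in\mathbb{F}_2^{2n}$ satisfies $$\vec K = S\vec J + \vec F_0 \pmod 2,$$ where $\vec F_0\in\{0,1\}^{2n}$ depends on $S$ but not on $\vec J$.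
   Context: Single-qubit Paulis: $X=\begin{pmatrix}0&1\\1&0\end{pmatrix}$, $Y=\begin{pmatrix}0&-i\\i&0\end{pmatrix}$, $Z=\begin{pmatrix}1&0\\0&-1\end{pmatrix}$; $X_j,Z_j$ act on qubit $j$. Labeling: $P^{00}=I$, $P^{01}=X$, $P^{10}=Z$, $P^{11}=Y$, and for $\vec a,\vec b\in\{0,1\}^n$, $P^{\vec a,\vec b}=P^{a_1b_1}\otimes\cdots\otimes P^{a_nb_n}$; equivalently $P^{\vec a,\vec b}=(-i)^{\vec a\cdot\vec b}\prod_{i} Z_i^{a_i}X_i^{b_i}$. The Pauli group is $\mathcal{P}_n=\{i^kP^{\vec a,\vec b}\}$ and the Clifford group is $\mathcal{C}_n=\{U\in U(2^n): U\mathcal{P}_nU^\dagger\subseteq\mathcal{P}_n\}$. Twin-$C$ circuit: two registers $\mathcal{A},\mathcal{B}$ of $n$ qubits each are prepared in the computational basis state $|\vec i\rangle_{\mathcal{A}}|\vec j\rangle_{\mathcal{B}}$; apply $H^{\otimes n}$ to $\mathcal{A}$; apply CNOTs from qubit $r$ of $\mathcal{A}$ (control) to qubit $r$ of $\mathcal{B}$ (target) for each $r=1,\dots,n$; apply $C$ to $\mathcal{A}$ and $C$ to $\mathcal{B}$; apply the same transversal CNOTs again; apply $H^{\otimes n}$ to $\mathcal{A}$; measure both registers in the computational basis, obtaining $\vec k$ on $\mathcal{A}$ and $\vec\ell$ on $\mathcal{B}$. (The last three steps constitute a Bell-basis measurement.) *)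

(* Defs.v *)
From HB Require Import structures.
From mathcomp Require Import all_boot all_order all_algebra.
Set Implicit Arguments. Unset Strict Implicit. Unset Printing Implicit Defensive.
Import GRing.Theory Num.Theory.
Local Open Scope ring_scope.

(* computational basis labels of m qubits: bit strings in F_2^m *)
Definition bits (m : nat) := 'cV['F_2]_m.
Definition qdim (m : nat) : nat := #|{: bits m}|.
Definition idx (m : nat) (x : bits m) : 'I_(qdim m) := enum_rank x.
Definition vec (m : nat) (p : 'I_(qdim m)) : bits m := enum_val p.
Definition bit (m : nat) (x : bits m) (r : 'I_m) : nat := val (x r 0).
Definition unitvec (m : nat) (r : 'I_m) : bits m := delta_mx r 0.

Section Ops.
Variable K : numClosedFieldType.

(* M p q = <p| M |q> *)
Definition adj (d : nat) (M : 'M[K]_d) : 'M[K]_d := (map_mx Num.conj M)^T.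
Definition unitary (d : nat) (U : 'M[K]_d) : Prop := U *m adj U = 1%:M.
Definition mxprod (d : nat) (I : finType) (F : I -> 'M[K]_d) : 'M[K]_d :=
  \big[@mulmx K d d d/1%:M]_(r : I) F r.
Definition mxpow (d : nat) (M : 'M[K]_d) (k : nat) : 'M[K]_d :=
  iter k (mulmx M) 1%:M.

Section Gates.
Variable m : nat.
Definition opZ (r : 'I_m) : 'M[K]_(qdim m) :=
  \matrix_(p, q) (if p == q then (-1) ^+ bit (vec q) r else 0).
Definition opX (r : 'I_m) : 'M[K]_(qdim m) :=
  \matrix_(p, q) ((vec p == vec q + unitvec r)%:R).
Definition opH (r : 'I_m) : 'M[K]_(qdim m) :=
  \matrix_(p, q)
    (if [forall s : 'I_m, (s != r) ==> (vec p s 0 == vec q s 0)]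
     then (-1) ^+ (bit (vec p) r * bit (vec q) r) / sqrtC 2 else 0).
Definition opCX (c t : 'I_m) : 'M[K]_(qdim m) :=
  \matrix_(p, q) ((vec p == vec q + (vec q c 0) *: unitvec t)%:R).

Definition pauli (a b : bits m) : 'M[K]_(qdim m) :=
  (- 'i) ^+ (\sum_(r < m) bit a r * bit b r)%N *:
    mxprod (fun r : 'I_m => mxpow (opZ r) (bit a r) *m mxpow (opX r) (bit b r)).

Definition in_pauli_group (M : 'M[K]_(qdim m)) : Prop :=
  exists (k : nat) (a b : bits m), M = 'i ^+ k *: pauli a b.

Definition clifford (U : 'M[K]_(qdim m)) : Prop :=
  unitary U /\
  forall M, in_pauli_group M -> in_pauli_group (U *m M *m adj U).
End Gates.

(* U (x) V acting on registers A (first n qubits) and B (last n qubits) *)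
Definition tens (n : nat) (U V : 'M[K]_(qdim n)) : 'M[K]_(qdim (n + n)) :=
  \matrix_(p, q)
    (U (idx (usubmx (vec p))) (idx (usubmx (vec q))) *
     V (idx (dsubmx (vec p))) (idx (dsubmx (vec q)))).

Definition HA (n : nat) : 'M[K]_(qdim (n + n)) :=
  mxprod (fun r : 'I_n => opH (lshift n r)).
Definition CXs (n : nat) : 'M[K]_(qdim (n + n)) :=
  mxprod (fun r : 'I_n => opCX (lshift n r) (rshift n r)).

Definition twinC (n : nat) (C : 'M[K]_(qdim n)) : 'M[K]_(qdim (n + n)) :=
  HA n *m CXs n *m tens C C *m CXs n *m HA n.

(* amplitude <k,l| Twin-C |i,j> ; outcome K has nonzero probability iff nonzero *)
Definition twin_amp (n : nat) (C : 'M[K]_(qdim n)) (i j k l : bits n) : K :=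
  twinC C (idx (col_mx k l)) (idx (col_mx i j)).
End Ops.

Definition symp (n : nat) (a b c d : 'I_n -> bits n) : 'M['F_2]_(n + n) :=
  block_mx (\matrix_(p, q) a q p 0) (\matrix_(p, q) c q p 0)
           (\matrix_(p, q) b q p 0) (\matrix_(p, q) d q p 0).

(* Main.v *)
Require Import Defs.
From HB Require Import structures.
From mathcomp Require Import all_boot all_order all_algebra.
From mathcomp Require Import ring.
Import GRing.Theory Num.Theory.
Local Open Scope ring_scope.
Set Implicit Arguments. Unset Strict Implicit. Unset Printing Implicit Defensive.

Lemma F2_cases (u : 'F_2) : u = 0 \/ u = 1.
Proof. case: u => [[|[|k]] Hk]; [left|right|by []]; exact: val_inj. Qed.
Lemma F2_add_self (u : 'F_2) : u + u = 0.
Proof. case: (F2_cases u) => ->. by rewrite addr0. by apply: val_inj. Qed.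

Section Infra.
Variable K : numClosedFieldType.

Lemma vecK m (x : bits m) : vec (idx x) = x.
Proof. exact: enum_rankK. Qed.
Lemma idxK m (p : 'I_(qdim m)) : idx (vec p) = p.
Proof. exact: enum_valK. Qed.

Lemma sum_qdim m (F : 'I_(qdim m) -> K) : \sum_p F p = \sum_(x : bits m) F (idx x).
Proof.
rewrite (reindex (@idx m)) //; exists (@vec m) => z _; [exact: vecK | exact: idxK].
Qed.

Definition mb m (M : 'M[K]_(qdim m)) (x y : bits m) := M (idx x) (idx y).

Lemma mbP m (M N : 'M[K]_(qdim m)) : (forall x y, mb M x y = mb N x y) -> M = N.
Proof. move=> H; apply/matrixP => p q; rewrite -(idxK p) -(idxK q); exact: H. Qed.

Lemma mb_mul m (M N : 'M[K]_(qdim m)) x y :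
  mb (M *m N) x y = \sum_w mb M x w * mb N w y.
Proof. by rewrite /mb mxE sum_qdim. Qed.

Lemma sum_pick m (F : bits m -> K) z : \sum_w (w == z)%:R * F w = F z.
Proof.
rewrite (bigD1 z) //= eqxx mul1r big1 ?addr0 // => w /negbTE->; by rewrite mul0r.
Qed.

Definition mono m (g : bits m -> bits m) (phi : bits m -> K) : 'M[K]_(qdim m) :=
  \matrix_(p, q) ((vec p == g (vec q))%:R * phi (vec q)).

Lemma mb_mono m g phi (x y : bits m) : mb (mono g phi) x y = (x == g y)%:R * phi y.
Proof. by rewrite /mb mxE !vecK. Qed.

Lemma mono_ext m g g' phi phi' : g =1 g' -> phi =1 phi' -> @mono m g phi = mono g' phi'.
Proof. by move=> Hg Hp; apply: mbP => x y; rewrite !mb_mono Hg Hp. Qed.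

Lemma mulmx_mono_r m (M : 'M[K]_(qdim m)) g phi x y :
  mb (M *m mono g phi) x y = mb M x (g y) * phi y.
Proof.
rewrite mb_mul -(sum_pick (fun w => mb M x w * phi y) (g y)).
apply: eq_bigr => w _; rewrite mb_mono.
by rewrite mulrCA.
Qed.

Lemma mulmx_mono_l m (M : 'M[K]_(qdim m)) g phi x y :
  involutive g -> mb (mono g phi *m M) x y = phi (g x) * mb M (g x) y.
Proof.
move=> Hg; rewrite mb_mul -(sum_pick (fun w => phi w * mb M w y) (g x)).
apply: eq_bigr => w _; rewrite mb_mono -mulrA.
suff -> : (x == g w) = (w == g x) by [].
apply/eqP/eqP => ->; by rewrite Hg.
Qed.

Lemma mono_mul m g1 phi1 g2 phi2 :
  @mono m g1 phi1 *m mono g2 phi2 = mono (g1 \o g2) (fun x => phi1 (g2 x) * phi2 x).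
Proof. by apply: mbP => x y; rewrite mulmx_mono_r !mb_mono mulrA. Qed.

Lemma mono1 m : 1%:M = @mono m id (fun _ => 1).
Proof.
apply: mbP => x y; rewrite mb_mono /mb !mxE mulr1.
by rewrite (inj_eq (can_inj (@vecK m))).
Qed.


Definition sg (u : 'F_2) : K := (-1) ^+ (val u).

Lemma sg0 : sg 0 = 1. Proof. by []. Qed.
Lemma sg1 : sg 1 = -1. Proof. by rewrite /sg /= expr1. Qed.

Lemma sgD u v : sg (u + v) = sg u * sg v.
Proof.
case: (F2_cases u) => ->; case: (F2_cases v) => ->;
  rewrite ?add0r ?addr0 ?sg0 ?mul1r ?mulr1 //.
by rewrite F2_add_self sg0 sg1 mulrNN mulr1.
Qed.

Lemma sg_sq u : sg u * sg u = 1.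
Proof. by rewrite -sgD F2_add_self. Qed.

Lemma sg_neq0 u : sg u != 0.
Proof. by rewrite /sg signr_eq0. Qed.

Lemma m1_neq1 : (-1 : K) != 1.
Proof.
apply/eqP => H; have : (2%:R : K) == 0.
  by rewrite -[2%N]/(1 + 1)%N natrD -{1}H addNr.
by rewrite pnatr_eq0.
Qed.

Lemma sg_inj u v : sg u = sg v -> u = v.
Proof.
case: (F2_cases u) => ->; case: (F2_cases v) => -> //; rewrite sg0 sg1 => H.
  by move: m1_neq1; rewrite -H eqxx.
by move: m1_neq1; rewrite H eqxx.
Qed.

Lemma sgM (u v : 'F_2) : (-1) ^+ (val u * val v)%N = sg (u * v).
Proof.
by case: (F2_cases u) => ->; case: (F2_cases v) => ->; rewrite ?mul0r ?mulr0 ?mulr1.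
Qed.

Lemma sg_sum (I : Type) (s : seq I) (P : pred I) (F : I -> 'F_2) :
  sg (\sum_(i <- s | P i) F i) = \prod_(i <- s | P i) sg (F i).
Proof. exact: (big_morph sg sgD sg0). Qed.

Definition dot m (x y : bits m) : 'F_2 := \sum_r x r 0 * y r 0.

Lemma opZ_mono m (r : 'I_m) : opZ K r = mono id (fun y => sg (y r 0)).
Proof.
apply: mbP => x y; rewrite mb_mono /mb mxE !vecK (inj_eq (can_inj (@vecK m))).
by case: eqP => _; rewrite ?mul1r ?mul0r.
Qed.

Lemma opX_mono m (r : 'I_m) : opX K r = mono (fun y => y + unitvec r) (fun _ => 1).
Proof. by apply: mbP => x y; rewrite mb_mono /mb mxE !vecK mulr1. Qed.

Lemma opCX_mono m (c t : 'I_m) :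
  opCX K c t = mono (fun y => y + y c 0 *: unitvec t) (fun _ => 1).
Proof. by apply: mbP => x y; rewrite mb_mono /mb mxE !vecK mulr1. Qed.

Lemma mxpowZ m (r : 'I_m) (a : bits m) :
  mxpow (opZ K r) (bit a r) = mono id (fun y => sg (a r 0 * y r 0)).
Proof.
rewrite /bit; case: (F2_cases (a r 0)) => ->.
  by rewrite /= mono1; apply: mono_ext => // y; rewrite mul0r.
by rewrite /= mulmx1 opZ_mono; apply: mono_ext => // y; rewrite mul1r.
Qed.

Lemma mxpowX m (r : 'I_m) (b : bits m) :
  mxpow (opX K r) (bit b r) = mono (fun y => y + b r 0 *: unitvec r) (fun _ => 1).
Proof.
rewrite /bit; case: (F2_cases (b r 0)) => ->.
  by rewrite /= mono1; apply: mono_ext => // y; rewrite scale0r addr0.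
by rewrite /= mulmx1 opX_mono; apply: mono_ext => // y; rewrite scale1r.
Qed.


Lemma unitvecE m (r p : 'I_m) : unitvec r p 0 = (p == r)%:R.
Proof. by rewrite /unitvec mxE andbT. Qed.

Lemma sum_unit_at m (s : seq 'I_m) (c : 'I_m -> 'F_2) p :
  (\sum_(r <- s) c r *: unitvec r) p 0 = \sum_(r <- s) c r * (p == r)%:R.
Proof. rewrite summxE; apply: eq_bigr => r _; by rewrite mxE unitvecE. Qed.

Lemma sum_unit_notin m (s : seq 'I_m) (c : 'I_m -> 'F_2) p :
  p \notin s -> (\sum_(r <- s) c r *: unitvec r) p 0 = 0.
Proof.
move=> ps; rewrite sum_unit_at big1_seq // => r /andP[_ rs].
have /negbTE -> : p != r by apply: contraNneq ps => ->.
by rewrite mulr0.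
Qed.

Lemma sum_unit_full m (b : bits m) : \sum_(r : 'I_m) b r 0 *: unitvec r = b.
Proof.
apply/matrixP => p j; rewrite (ord1 j) sum_unit_at (bigD1 p) //= eqxx mulr1.
rewrite big1 ?addr0 // => r /negbTE; by rewrite eq_sym => ->; rewrite mulr0.
Qed.

Lemma prod_pauli m (a b : bits m) (s : seq 'I_m) : uniq s ->
  \big[@mulmx K _ _ _/1%:M]_(r <- s) (mxpow (opZ K r) (bit a r) *m mxpow (opX K r) (bit b r))
  = mono (fun y => y + \sum_(r <- s) b r 0 *: unitvec r)
         (fun y => sg (\sum_(r <- s) a r 0 * (y r 0 + b r 0))).
Proof.
elim: s => [|r s IH] /=.
  by move=> _; rewrite big_nil mono1; apply: mono_ext => y; rewrite big_nil ?addr0.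
case/andP => rs us; rewrite big_cons IH // mxpowZ mxpowX !mono_mul.
apply: mono_ext => y /=.
  by rewrite big_cons [b r 0 *: _ + _]addrC addrA.
by rewrite big_cons sgD mulr1 !mxE sum_unit_notin // eqxx addr0 mulr1.
Qed.

Lemma scale_mono m (c : K) g phi :
  c *: @mono m g phi = mono g (fun y => c * phi y).
Proof. by apply: mbP => x y; rewrite mb_mono /mb mxE -/(mb _ _ _) mb_mono mulrCA. Qed.

Lemma pauli_mono m (a b : bits m) :
  pauli K a b = mono (fun y => y + b)
    (fun y => (- 'i) ^+ (\sum_(r < m) bit a r * bit b r)%N * sg (dot a (y + b))).
Proof.
rewrite /pauli /mxprod prod_pauli ?index_enum_uniq // scale_mono.
apply: mono_ext => y; first by rewrite sum_unit_full.
by rewrite /dot; congr (_ * sg _); apply: eq_bigr => r _; rewrite !mxE.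
Qed.


Definition cxf n (y : bits (n + n)) : bits (n + n) :=
  y + \sum_(r : 'I_n) y (lshift n r) 0 *: unitvec (rshift n r).

Lemma prod_cx n (s : seq 'I_n) :
  \big[@mulmx K _ _ _/1%:M]_(r <- s) opCX K (lshift n r) (rshift n r)
  = mono (fun y => y + \sum_(r <- s) y (lshift n r) 0 *: unitvec (rshift n r))
         (fun _ => 1).
Proof.
elim: s => [|r s IH] /=.
  by rewrite big_nil mono1; apply: mono_ext => y; rewrite ?big_nil ?addr0.
rewrite big_cons IH opCX_mono mono_mul; apply: mono_ext => y /=; last by rewrite mulr1.
have H0 : (\sum_(k <- s) y (lshift n k) 0 *: unitvec (rshift n k)) (lshift n r) 0 = 0.
  by rewrite summxE big1 // => i _; rewrite mxE unitvecE eq_lrshift mulr0.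
rewrite [X in X *: _]mxE H0 addr0 big_cons.
by rewrite [_ *: unitvec _ + _]addrC addrA.
Qed.

Lemma CXs_mono n : CXs K n = mono (@cxf n) (fun _ => 1).
Proof. by rewrite /CXs /mxprod prod_cx. Qed.

Lemma cxf_col n (u v : bits n) : cxf (col_mx u v) = col_mx u (v + u).
Proof.
apply/matrixP => t j; rewrite (ord1 j) -(splitK t); case: (split t) => p /=.
  rewrite /cxf mxE summxE big1 ?addr0; first by rewrite !col_mxEu.
  by move=> i _; rewrite mxE unitvecE eq_lrshift mulr0.
rewrite /cxf mxE summxE col_mxEd (bigD1 p) //=.
rewrite [X in _ + (X + _)]mxE unitvecE eqxx mulr1 col_mxEu col_mxEd.
rewrite big1 ?addr0; first by rewrite mxE.
move=> i /negbTE ip; rewrite mxE unitvecE (inj_eq (@rshift_inj _ _)) eq_sym ip.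
by rewrite mulr0.
Qed.

Lemma bits_add_self m (x : bits m) : x + x = 0.
Proof. by apply/matrixP => i j; rewrite !mxE F2_add_self. Qed.

Lemma addbK m (x y : bits m) : x + y + y = x.
Proof. by rewrite -addrA bits_add_self addr0. Qed.

Lemma cxf_invol n : involutive (@cxf n).
Proof.
move=> y; rewrite -[y]vsubmxK !cxf_col; congr col_mx.
by rewrite -addrA bits_add_self addr0.
Qed.


Lemma mb_tens n (U V : 'M[K]_(qdim n)) x y :
  mb (tens U V) x y = mb U (usubmx x) (usubmx y) * mb V (dsubmx x) (dsubmx y).
Proof. by rewrite /mb /tens mxE !vecK. Qed.

Lemma sum_unique m (F : bits m -> K) z :
  (forall w, w != z -> F w = 0) -> \sum_w F w = F z.
Proof. by move=> H; rewrite (bigD1 z) //= big1 ?addr0. Qed.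

Definition Hs n (s : seq 'I_n) (x y : bits (n + n)) : K :=
  (if [forall t, (t \notin map (lshift n) s) ==> (x t 0 == y t 0)] then 1 else 0)
  * ((sqrtC 2)^-1 ^+ size s)
  * sg (\sum_(r <- s) x (lshift n r) 0 * y (lshift n r) 0).

Lemma bitsP m (x y : bits m) : (forall t, x t 0 = y t 0) -> x = y.
Proof. by move=> H; apply/matrixP => t j; rewrite (ord1 j). Qed.

Lemma mb1 m (x y : bits m) : mb 1%:M x y = (x == y)%:R.
Proof. by rewrite mono1 mb_mono mulr1. Qed.

Lemma prod_H n (s : seq 'I_n) : uniq s -> forall x y,
  mb (\big[@mulmx K _ _ _/1%:M]_(r <- s) opH K (lshift n r)) x y = Hs s x y.
Proof.
elim: s => [|r s IH].
  move=> _ x y; rewrite big_nil mb1 /Hs big_nil /= expr0 sg0 !mulr1.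
  have -> : [forall t, true ==> (x t 0 == y t 0)] = (x == y).
    apply/forallP/eqP => [H|-> t]; last by rewrite eqxx.
    apply: bitsP => t.
    by move: (H t) => /= /eqP.
  by case: (x == y).
case/andP => rs us x y.
set w0 := x + (x (lshift n r) 0 + y (lshift n r) 0) *: unitvec (lshift n r).
have w0E : forall t, w0 t 0 = if t == lshift n r then y t 0 else x t 0.
  move=> t; rewrite mxE [X in _ + X]mxE unitvecE; case: eqP => [->|_].
    by rewrite mulr1 addrA F2_add_self add0r.
  by rewrite mulr0 addr0.
have lr_notin : lshift n r \notin map (lshift n) s.
  by rewrite (mem_map (@lshift_inj _ _)).
rewrite big_cons mb_mul (sum_unique (z:=w0)); last first.
  move=> w wne; rewrite IH // /mb mxE !vecK /Hs.
  case: ifP => [/forallP H1|_]; last by rewrite mul0r.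
  case: ifP => [/forallP H2|_]; last by rewrite !mul0r mulr0.
  exfalso; move/eqP: wne; apply; apply: bitsP => t; rewrite w0E.
  case: eqP => [->|/eqP ne].
    by move: (H2 (lshift n r)); rewrite lr_notin /= => /eqP.
  by move: (H1 t); rewrite ne /= => /eqP.
rewrite IH // /mb mxE !vecK /Hs.
have -> : [forall s0, (s0 != lshift n r) ==> (x s0 0 == w0 s0 0)].
  by apply/forallP => t; apply/implyP => /negbTE ne; rewrite w0E ne.
have -> : [forall t, (t \notin map (lshift n) s) ==> (w0 t 0 == y t 0)] =
          [forall t, (t \notin map (lshift n) (r :: s)) ==> (x t 0 == y t 0)].
  apply/forallP/forallP => H t; apply/implyP => tn; move: (H t).
    move: tn; rewrite /= in_cons negb_or => /andP[ne tn]; rewrite tn w0E.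
    by rewrite (negbTE ne).
  rewrite w0E; case: (t =P lshift n r) => [->|/eqP ne]; first by rewrite eqxx.
  by rewrite /= in_cons negb_or ne tn.
have -> : \sum_(r0 <- s) w0 (lshift n r0) 0 * y (lshift n r0) 0 =
          \sum_(r0 <- s) x (lshift n r0) 0 * y (lshift n r0) 0.
  apply: eq_big_seq => r' r's; rewrite w0E (inj_eq (@lshift_inj _ _)).
  by have /negbTE -> : r' != r by apply: contraNneq rs => <-.
rewrite /bit w0E eqxx sgM big_cons sgD /= exprS.
case: ifP => _; last by rewrite !mul0r mulr0.
rewrite !mul1r; ring.
Qed.


Definition cH n : K := (sqrtC 2)^-1 ^+ size (index_enum 'I_n).

Lemma HA_mb n (x y : bits (n + n)) :
  mb (HA K n) x y = (dsubmx x == dsubmx y)%:R * cH n * sg (dot (usubmx x) (usubmx y)).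
Proof.
rewrite /HA /mxprod prod_H ?index_enum_uniq // /Hs /cH.
have -> : [forall t, (t \notin map (lshift n) (index_enum 'I_n)) ==> (x t 0 == y t 0)]
          = (dsubmx x == dsubmx y).
  apply/forallP/eqP => [H|H t].
    apply: bitsP => p; rewrite !mxE; move: (H (rshift n p)).
    have -> : rshift n p \notin map (lshift n) (index_enum 'I_n).
      by apply/mapP => [[q _ /eqP]]; rewrite eq_rlshift.
    by move/eqP.
  apply/implyP; rewrite -(splitK t); case: (split t) => p /=.
    by rewrite (mem_map (@lshift_inj _ _)) mem_index_enum.
  move=> _; have := congr1 (fun M : bits n => M p 0) H; rewrite /= !mxE => ->.
  by [].
rewrite /dot; congr (_ * sg _); first by case: (_ == _).
by apply: eq_bigr => r _; rewrite !mxE.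
Qed.

Lemma sum_col n (F : bits (n + n) -> K) :
  \sum_q F q = \sum_(y : bits n) \sum_(z : bits n) F (col_mx y z).
Proof.
rewrite pair_big /=.
rewrite (reindex (fun q : bits (n + n) => (usubmx q, dsubmx q))) /=.
  by apply: eq_bigr => q _; rewrite vsubmxK.
exists (fun p : bits n * bits n => col_mx p.1 p.2) => [q _|[u v] _] /=.
  by rewrite vsubmxK.
by rewrite col_mxKu col_mxKd.
Qed.

Lemma eq_add_swap m (l z y : bits m) : (l == z + y) = (z == l + y).
Proof. by apply/eqP/eqP => ->; rewrite addbK. Qed.

Lemma sum_pick_l m (a : bits m) (c : K) (F : bits m -> K) :
  \sum_z ((z == a)%:R * c) * F z = c * F a.
Proof.
rewrite -(sum_pick (fun z => c * F z) a); apply: eq_bigr => z _; by rewrite mulrA.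
Qed.

Lemma sum_pick_r m (a : bits m) (c : K) (F : bits m -> K) :
  \sum_z F z * ((z == a)%:R * c) = F a * c.
Proof.
rewrite -(sum_pick (fun z => F z * c) a); apply: eq_bigr => z _.
by rewrite mulrCA mulrA.
Qed.

Definition Amp n (C : 'M[K]_(qdim n)) (i j k l : bits n) : K :=
  \sum_(x : bits n) \sum_(y : bits n)
     sg (dot k y) * sg (dot x i) * (mb C y x * mb C (l + y) (j + x)).

Lemma twin_amp_eq n (C : 'M[K]_(qdim n)) i j k l :
  twin_amp C i j k l = cH n * cH n * Amp C i j k l.
Proof.
change (mb (twinC C) (col_mx k l) (col_mx i j) = cH n * cH n * Amp C i j k l).
rewrite /twinC CXs_mono mb_mul.
under eq_bigr => p _ do rewrite mulmx_mono_r mb_mul mulr1.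
under eq_bigr => p _ do under eq_bigr => q _ do rewrite mulmx_mono_r mulr1.
rewrite sum_col.
under eq_bigr => x _ do under eq_bigr => w _ do rewrite sum_col cxf_col HA_mb !col_mxKd !col_mxKu.
under eq_bigr => x _ do under eq_bigr => w _ do under eq_bigr => y _ do
  under eq_bigr => z _ do rewrite cxf_col HA_mb mb_tens !col_mxKu !col_mxKd eq_add_swap.
under eq_bigr => x _ do under eq_bigr => w _ do under eq_bigr => y _ do under eq_bigr => z _ do rewrite -!mulrA.
under eq_bigr => x _ do under eq_bigr => w _ do under eq_bigr => y _ do rewrite sum_pick.
under eq_bigr => x _ do under eq_bigr => w _ do rewrite mulrC -!mulrA.
under eq_bigr => x _ do rewrite sum_pick.
rewrite /Amp mulr_sumr; apply: eq_bigr => x _.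
rewrite !mulr_sumr; apply: eq_bigr => y _.
ring.
Qed.


Definition ph m (a b : bits m) : K := (- 'i) ^+ (\sum_(r < m) bit a r * bit b r)%N.

Lemma ph_sq m (a b : bits m) : ph a b * ph a b = sg (dot a b).
Proof.
rewrite /ph -exprMn_comm; last exact: mulrC.
have -> : (- 'i) * (- 'i) = -1 :> K by rewrite mulrNN -expr2 sqrCi.
rewrite /dot sg_sum.
elim: (index_enum _) => [|r s IH]; first by rewrite !big_nil expr0.
by rewrite !big_cons exprD IH /bit sgM.
Qed.

Lemma dotDr m (u v w : bits m) : dot u (v + w) = dot u v + dot u w.
Proof. by rewrite /dot -big_split; apply: eq_bigr => r _; rewrite mxE mulrDr. Qed.
Lemma dotDl m (u v w : bits m) : dot (v + w) u = dot v u + dot w u.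
Proof. by rewrite /dot -big_split; apply: eq_bigr => r _; rewrite mxE mulrDl. Qed.
Lemma dotC m (u v : bits m) : dot u v = dot v u.
Proof. by rewrite /dot; apply: eq_bigr => r _; rewrite mulrC. Qed.
Lemma dot_unit m (r : 'I_m) (u : bits m) : dot (unitvec r) u = u r 0.
Proof.
rewrite /dot (bigD1 r) //= unitvecE eqxx mul1r big1 ?addr0 // => p /negbTE pr.
by rewrite unitvecE pr mul0r.
Qed.

Lemma conj_rel n (C G : 'M[K]_(qdim n)) (s : K) (a b : bits n) :
  adj C *m C = 1%:M -> C *m G *m adj C = s *: pauli K a b ->
  forall y x, mb (C *m G) y x = s * ph a b * sg (dot a y) * mb C (y + b) x.
Proof.
move=> HU H y x.
have -> : C *m G = (s *: pauli K a b) *m C by rewrite -H -mulmxA HU mulmx1.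
rewrite pauli_mono scale_mono mulmx_mono_l; last by move=> z; rewrite addbK.
by rewrite addbK mulrA.
Qed.

Lemma mb_CZ n (C : 'M[K]_(qdim n)) r y x : mb (C *m opZ K r) y x = mb C y x * sg (x r 0).
Proof. by rewrite opZ_mono mulmx_mono_r. Qed.

Lemma mb_CX n (C : 'M[K]_(qdim n)) r y x :
  mb (C *m opX K r) y x = mb C y (x + unitvec r).
Proof. by rewrite opX_mono mulmx_mono_r mulr1. Qed.


Lemma Amp_Z n (C : 'M[K]_(qdim n)) (i j k l a b : bits n) r (kp : K) :
  (forall y x, mb C y x * sg (x r 0) = kp * sg (dot a y) * mb C (y + b) x) ->
  kp * kp = sg (dot a b) ->
  sg (j r 0) * Amp C i j k l = sg (dot a b + dot a l + dot k b) * Amp C i j k l.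
Proof.
move=> E Hk; rewrite /Amp !mulr_sumr; apply: eq_bigr => x _.
rewrite !mulr_sumr [RHS](reindex_inj (addIr b)) /=; apply: eq_bigr => y _.
have hj : sg (j r 0) = sg (x r 0) * sg ((j + x) r 0).
  by rewrite mxE sgD mulrCA sg_sq mulr1.
have e1 := E y x; have e2 := E (l + y) (j + x).
transitivity (sg (dot k y) * sg (dot x i) * ((mb C y x * sg (x r 0)) *
   (mb C (l + y) (j + x) * sg ((j + x) r 0)))).
  by rewrite hj; ring.
rewrite e1 e2 !dotDr !sgD -Hk (addrA l y b).
set C1 := mb C (y + b) x; set C2 := mb C (l + y + b) (j + x).
transitivity (kp * kp * sg (dot a l) * sg (dot k y) * sg (dot x i) * C1 * C2 *
   (sg (dot a y) * sg (dot a y))); first by ring.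
rewrite sg_sq mulr1; symmetry.
transitivity (kp * kp * sg (dot a l) * sg (dot k y) * sg (dot x i) * C1 * C2 *
   (sg (dot k b) * sg (dot k b))); first by ring.
by rewrite sg_sq mulr1.
Qed.


Lemma Amp_X n (C : 'M[K]_(qdim n)) (i j k l c d : bits n) r (kp : K) :
  (forall y x, mb C y (x + unitvec r) = kp * sg (dot c y) * mb C (y + d) x) ->
  kp * kp = sg (dot c d) ->
  sg (i r 0) * Amp C i j k l = sg (dot c d + dot c l + dot k d) * Amp C i j k l.
Proof.
move=> E Hk; rewrite /Amp !mulr_sumr [LHS](reindex_inj (addIr (unitvec r))) /=.
apply: eq_bigr => x _.
rewrite !mulr_sumr [RHS](reindex_inj (addIr d)) /=; apply: eq_bigr => y _.
rewrite (addrA j x) E E dotDl dot_unit !dotDr !sgD -Hk (addrA l y d).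
set C1 := mb C (y + d) x; set C2 := mb C (l + y + d) (j + x).
transitivity (kp * kp * sg (dot c l) * sg (dot k y) * sg (dot x i) * C1 * C2 *
   (sg (i r 0) * sg (i r 0)) * (sg (dot c y) * sg (dot c y))); first by ring.
rewrite !sg_sq !mulr1; symmetry.
transitivity (kp * kp * sg (dot c l) * sg (dot k y) * sg (dot x i) * C1 * C2 *
   (sg (dot k d) * sg (dot k d))); first by ring.
by rewrite sg_sq mulr1.
Qed.


Lemma addb2 m (x u v : bits m) : x + u + v + u + v = x.
Proof. by rewrite -(addrA (x + u + v)) [u + v]addrC addrA !addbK. Qed.

Lemma comm_ZX n (C : 'M[K]_(qdim n)) (a b c d : bits n) r t kz kx y0 x0 :
  (forall y x, mb C y x * sg (x r 0) = kz * sg (dot a y) * mb C (y + b) x) ->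
  (forall y x, mb C y (x + unitvec t) = kx * sg (dot c y) * mb C (y + d) x) ->
  kz != 0 -> kx != 0 -> mb C y0 x0 != 0 ->
  dot a d + dot b c = (r == t)%:R.
Proof.
move=> EZ EX nz nx nC.
set y := y0 + b + d.
have Hy1 : y + b + d = y0 by rewrite /y addb2.
have Hy2 : y + d + b = y0 by rewrite /y !addbK.
clearbody y.
have e1 := EZ y (x0 + unitvec t); have e2 := EX (y + b) x0.
have e3 := EX y x0; have e4 := EZ (y + d) x0.
rewrite e2 Hy1 in e1; rewrite Hy2 in e4.
have H : kz * sg (dot a y) * (kx * sg (dot c (y + b)) * mb C y0 x0) =
         kx * sg (dot c y) * (kz * sg (dot a (y + d)) * mb C y0 x0) * sg (unitvec t r 0).
  by rewrite -e1 e3 -e4 mxE sgD; ring.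
rewrite !dotDr !sgD in H.
set X := kz * kx * sg (dot a y) * sg (dot c y) * mb C y0 x0.
have nX : X != 0 by rewrite /X !mulf_neq0 // sg_neq0.
have H2 : X * sg (dot c b) = X * sg (dot a d + unitvec t r 0).
  rewrite sgD; transitivity (kz * sg (dot a y) * (kx * (sg (dot c y) * sg (dot c b)) * mb C y0 x0)).
    by rewrite /X; ring.
  by rewrite H /X; ring.
move/(mulfI nX)/sg_inj: H2; rewrite unitvecE => H3.
by rewrite (dotC b c) H3 addrA F2_add_self add0r.
Qed.

Lemma comm_ZZ n (C : 'M[K]_(qdim n)) (a b a' b' : bits n) r t kz kz' y0 x0 :
  (forall y x, mb C y x * sg (x r 0) = kz * sg (dot a y) * mb C (y + b) x) ->
  (forall y x, mb C y x * sg (x t 0) = kz' * sg (dot a' y) * mb C (y + b') x) ->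
  kz != 0 -> kz' != 0 -> mb C y0 x0 != 0 ->
  dot b a' + dot a b' = 0.
Proof.
move=> E1 E2 nz nz' nC.
set y := y0 + b + b'.
have Hy1 : y + b + b' = y0 by rewrite /y addb2.
have Hy2 : y + b' + b = y0 by rewrite /y !addbK.
clearbody y.
have e1 := E1 y x0; have e2 := E2 (y + b) x0.
have e3 := E2 y x0; have e4 := E1 (y + b') x0.
rewrite Hy1 in e2; rewrite Hy2 in e4.
have H : kz * sg (dot a y) * (kz' * sg (dot a' (y + b)) * mb C y0 x0) =
         kz' * sg (dot a' y) * (kz * sg (dot a (y + b')) * mb C y0 x0).
  rewrite -e2 -e4 mulrA -e1 [in RHS]mulrA -e3; ring.
rewrite !dotDr !sgD in H.
set X := kz * kz' * sg (dot a y) * sg (dot a' y) * mb C y0 x0.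
have nX : X != 0 by rewrite /X !mulf_neq0 // sg_neq0.
have H2 : X * sg (dot a' b) = X * sg (dot a b').
  transitivity (kz * sg (dot a y) * (kz' * (sg (dot a' y) * sg (dot a' b)) * mb C y0 x0)).
    by rewrite /X; ring.
  by rewrite H /X; ring.
move/(mulfI nX)/sg_inj: H2 => H3.
by rewrite (dotC b a') H3 F2_add_self.
Qed.

Lemma comm_XX n (C : 'M[K]_(qdim n)) (c d c' d' : bits n) r t kx kx' y0 x0 :
  (forall y x, mb C y (x + unitvec r) = kx * sg (dot c y) * mb C (y + d) x) ->
  (forall y x, mb C y (x + unitvec t) = kx' * sg (dot c' y) * mb C (y + d') x) ->
  kx != 0 -> kx' != 0 -> mb C y0 x0 != 0 ->
  dot d c' + dot c d' = 0.
Proof.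
move=> E1 E2 nz nz' nC.
set y := y0 + d + d'.
have Hy1 : y + d + d' = y0 by rewrite /y addb2.
have Hy2 : y + d' + d = y0 by rewrite /y !addbK.
clearbody y.
have e1 := E1 y (x0 + unitvec t); have e2 := E2 (y + d) x0.
have e3 := E2 y (x0 + unitvec r); have e4 := E1 (y + d') x0.
rewrite Hy1 in e2; rewrite Hy2 in e4.
rewrite e2 in e1; rewrite e4 -addrA [unitvec r + _]addrC addrA e1 in e3.
rewrite !dotDr !sgD in e3.
set X := kx * kx' * sg (dot c y) * sg (dot c' y) * mb C y0 x0.
have nX : X != 0 by rewrite /X !mulf_neq0 // sg_neq0.
have H2 : X * sg (dot c d') = X * sg (dot c' d).
  transitivity (kx * sg (dot c y) * (kx' * (sg (dot c' y) * sg (dot c' d)) * mb C y0 x0));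
    last by rewrite /X; ring.
  transitivity (kx * (sg (dot c y) * sg (dot c d')) * (kx' * sg (dot c' y) * mb C y0 x0));
    first by rewrite /X; ring.
  by rewrite e3; ring.
move/(mulfI nX)/sg_inj: H2 => H3.
by rewrite (dotC d c') -H3 F2_add_self.
Qed.


Definition Vm n (a b c d : 'I_n -> bits n) : 'M['F_2]_(n + n) :=
  block_mx (\matrix_(r, p) d r p 0) (\matrix_(r, p) c r p 0)
           (\matrix_(r, p) b r p 0) (\matrix_(r, p) a r p 0).
Definition sv0 n (a b c d : 'I_n -> bits n) : 'cV['F_2]_(n + n) :=
  col_mx (\col_r dot (c r) (d r)) (\col_r dot (a r) (b r)).

Lemma mulE n (M : 'I_n -> bits n) (v : bits n) r :
  ((\matrix_(r0, p) M r0 p 0) *m v) r 0 = dot (M r) v.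
Proof. by rewrite mxE /dot; apply: eq_bigr => p _; rewrite mxE. Qed.

Lemma mulE2 n (M N : 'I_n -> bits n) r t :
  ((\matrix_(r0, p) M r0 p 0) *m (\matrix_(p, q) N q p 0)) r t = dot (M r) (N t).
Proof. by rewrite mxE /dot; apply: eq_bigr => p _; rewrite !mxE. Qed.

Lemma key n (C : 'M[K]_(qdim n)) (a b c d : 'I_n -> bits n) (f h : 'I_n -> bool) :
  clifford C ->
  (forall r : 'I_n, C *m opZ K r *m adj C = (-1) ^+ f r *: pauli K (a r) (b r)) ->
  (forall r : 'I_n, C *m opX K r *m adj C = (-1) ^+ h r *: pauli K (c r) (d r)) ->
  forall i j k l : bits n, twin_amp C i j k l != 0 ->
  col_mx i j = Vm a b c d *m col_mx k l + sv0 a b c d /\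
  Vm a b c d *m symp a b c d = 1%:M.
Proof.
move=> [HU _] HZ HX i j k l Hamp.
have HU' : adj C *m C = 1%:M := mulmx1C HU.
have ph_neq0 : forall u v : bits n, ph u v != 0.
  by move=> u v; rewrite /ph expf_neq0 // oppr_eq0 neq0Ci.
have sgn_sq : forall e : bool, (-1) ^+ e * (-1) ^+ e = 1 :> K.
  by case; rewrite ?mulr1 ?mulrNN ?mulr1.
have kz0 r : (-1) ^+ f r * ph (a r) (b r) != 0 by rewrite mulf_neq0 ?signr_eq0.
have kx0 r : (-1) ^+ h r * ph (c r) (d r) != 0 by rewrite mulf_neq0 ?signr_eq0.
have kzsq r : ((-1) ^+ f r * ph (a r) (b r)) * ((-1) ^+ f r * ph (a r) (b r))
     = sg (dot (a r) (b r)) by rewrite mulrACA sgn_sq mul1r ph_sq.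
have kxsq r : ((-1) ^+ h r * ph (c r) (d r)) * ((-1) ^+ h r * ph (c r) (d r))
     = sg (dot (c r) (d r)) by rewrite mulrACA sgn_sq mul1r ph_sq.
have EZ r y x : mb C y x * sg (x r 0) =
    (-1) ^+ f r * ph (a r) (b r) * sg (dot (a r) y) * mb C (y + b r) x.
  by rewrite -mb_CZ (conj_rel HU' (HZ r)).
have EX r y x : mb C y (x + unitvec r) =
    (-1) ^+ h r * ph (c r) (d r) * sg (dot (c r) y) * mb C (y + d r) x.
  by rewrite -mb_CX (conj_rel HU' (HX r)).
have HA0 : Amp C i j k l != 0.
  by apply: contraNneq Hamp => H; rewrite twin_amp_eq H mulr0.
have [y0 [x0 nC]] : exists y0 x0, mb C y0 x0 != 0.
  case: (boolP [exists y, [exists x, mb C y x != 0]]) => [/existsP[y /existsP[x H]]|H].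
    by exists y, x.
  exfalso; move: HA0; rewrite /Amp big1 ?eqxx // => x _; rewrite big1 // => y _.
  have : mb C y x == 0.
    by apply: contraNT H => Hn; apply/existsP; exists y; apply/existsP; exists x.
  by move/eqP ->; rewrite mul0r mulr0.
have Jrel r : j r 0 = dot (a r) (b r) + dot (a r) l + dot k (b r).
  by apply: sg_inj; apply: (mulIf HA0); exact: Amp_Z (EZ r) (kzsq r).
have Irel r : i r 0 = dot (c r) (d r) + dot (c r) l + dot k (d r).
  by apply: sg_inj; apply: (mulIf HA0); exact: Amp_X (EX r) (kxsq r).
split.
  rewrite /Vm /sv0 mul_block_col add_col_mx; congr col_mx; apply: bitsP => r.
    rewrite Irel mxE mxE !mulE mxE (dotC k); ring.
  rewrite Jrel mxE mxE !mulE mxE (dotC k); ring.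
rewrite /Vm /symp mulmx_block scalar_mx_block; congr block_mx; apply/matrixP => r t;
  rewrite [LHS]mxE !mulE2 mxE.
- rewrite (dotC (d r)) (dotC (c r)) eq_sym.
  exact: (comm_ZX (EZ t) (EX r) (kz0 t) (kx0 r) nC).
- exact: (comm_XX (EX r) (EX t) (kx0 r) (kx0 t) nC).
- exact: (comm_ZZ (EZ r) (EZ t) (kz0 r) (kz0 t) nC).
- rewrite addrC.
  exact: (comm_ZX (EZ r) (EX t) (kz0 r) (kx0 t) nC).
Qed.

End Infra.

Definition svS n (S : 'M['F_2]_(n + n)) : 'cV['F_2]_(n + n) :=
  col_mx (\col_t \sum_p S (lshift n p) (rshift n t) * S (rshift n p) (rshift n t))
         (\col_r \sum_p S (lshift n p) (lshift n r) * S (rshift n p) (lshift n r)).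

Lemma svS_symp n (a b c d : 'I_n -> bits n) : svS (symp a b c d) = sv0 a b c d.
Proof.
rewrite /svS /sv0 /symp; congr col_mx; apply/matrixP => r j; rewrite !mxE /dot;
  apply: eq_bigr => p _.
  by rewrite block_mxEur block_mxEdr !mxE.
by rewrite block_mxEul block_mxEdl !mxE.
Qed.

Unset Implicit Arguments.

Theorem lemma1 (K : numClosedFieldType) (n : nat) (hn : (0 < n)%N) :
  exists F0 : 'M['F_2]_(n + n) -> 'cV['F_2]_(n + n),
  forall (C : 'M[K]_(qdim n)) (a b c d : 'I_n -> bits n) (f h : 'I_n -> bool),
    clifford C ->
    (forall r : 'I_n, C *m opZ K r *m adj C = (-1) ^+ f r *: pauli K (a r) (b r)) ->
    (forall r : 'I_n, C *m opX K r *m adj C = (-1) ^+ h r *: pauli K (c r) (d r)) ->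
    forall i j k l : bits n,
      twin_amp C i j k l != 0 ->
      col_mx k l = symp a b c d *m col_mx i j + F0 (symp a b c d).
Proof.
exists (fun S => - (S *m svS S)).
move=> C a b c d f h HC HZ HX i j k l Hamp.
have [H1 H2] := key HC HZ HX Hamp.
have HSV := mulmx1C H2.
rewrite svS_symp -[col_mx k l]mul1mx -HSV -mulmxA.
have -> : Vm a b c d *m col_mx k l = col_mx i j - sv0 a b c d by rewrite H1 addrK.
by rewrite mulmxBr.
Qed.
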